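(* Let $F\in\mathbb{C}(X_1,\dots,X_n)$ be a rational function admitting a power series expansion at the origin $\sum_{k_1,\dots,k_n}a_{k_1,\dots,k_n}X_1^{k_1}\cdots X_n^{k_n}$ with non-negative coefficients $a_{k_1,\dots,k_n}\geq 0$. If $\sum_{k_1,\dots,k_n}a_{k_1,\dots,k_n}<\infty$, then there exists $\varepsilon>0$ such that this power series converges on the polydisk $\{(w_1,\dots,w_n)\in\mathbb{C}^n:\ |w_i|\leq 1+\varepsilon\text{ for all }1\leq i\leq n\}$. *)

(* Defs.v *)
From HB Require Import structures.
From mathcomp Require Import all_boot all_order all_algebra.
From mathcomp Require Import all_classical all_reals all_analysis.
From mathcomp Require Import complex.
Set Implicit Arguments. Unset Strict Implicit. Unset Printing Implicit Defensive.
Import Order.TTheory GRing.Theory Num.Theory.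
Local Open Scope ring_scope.

Definition midx (n : nat) := {ffun 'I_n -> nat}.

Definition mmax n (k : midx n) : nat := \max_(i < n) k i.

Definition box_midx n s (j : {ffun 'I_n -> 'I_s.+1}) : midx n :=
  [ffun i => nat_of_ord (j i)].

Definition is_poly (R : rcfType) n (p : midx n -> R[i]) : Prop :=
  exists d : nat, forall k : midx n, ~~ [forall i, (k i <= d)%N] -> p k = 0.

(* Coefficient of index k of the Cauchy product of (formal power series
   with coefficient functions) p and a:
   (p * a)_k = sum_{j <= k} p_j a_{k - j}. *)
Definition cauchy_coef (R : rcfType) n (p a : midx n -> R[i]) (k : midx n) : R[i] :=
  \sum_(j : {ffun 'I_n -> 'I_(mmax k).+1} | [forall i, (j i <= k i)%N])
     p (box_midx j) * a [ffun i => (k i - box_midx j i)%N].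

Definition monom (R : rcfType) n (w : 'I_n -> R[i]) (k : midx n) : R[i] :=
  \prod_(i < n) w i ^+ k i.

Definition cabs (R : rcfType) (z : R[i]) : R := complex.Re `|z|.

Definition midx0 n : midx n := [ffun _ => 0%N].

(* Main.v *)
Require Import Defs.
From HB Require Import structures.
From mathcomp Require Import all_boot all_order all_algebra.
From mathcomp Require Import all_classical all_reals all_analysis.
From mathcomp Require Import complex.
From mathcomp Require Import zify ring lra.
Set Implicit Arguments. Unset Strict Implicit. Unset Printing Implicit Defensive.
Import Order.TTheory GRing.Theory Num.Theory.



Local Open Scope ring_scope.


Section Decay.
Variable (F : numFieldType) (d : nat) (c : 'I_d -> F) (s : nat -> F).
Hypothesis rec : forall m, s (m + d)%N = \sum_(l < d) c l * s (m + l)%N.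

Definition d_isrec (x : nat -> F) := forall m, x (m + d)%N = \sum_(l < d) c l * x (m + l)%N.

Lemma d_rec_ext x y : d_isrec x -> d_isrec y -> (forall k, (k < d)%N -> x k = y k) ->
  forall k, x k = y k.
Proof.
move=> rx ry e; elim/ltn_ind => k IH.
case: (ltnP k d) => [/e//|hd].
rewrite -(subnK hd) rx ry; apply: eq_bigr => l _; congr (_ * _); apply: IH.
have := ltn_ord l; lia.
Qed.

Definition dE : 'M[F]_d := \matrix_(i, j) s (i + j)%N.
Definition dwin m : 'rV[F]_d := \row_j s (m + j)%N.

Lemma dwin_sub m : (dwin m <= dE)%MS.
Proof.
elim/ltn_ind: m => m IH.
case: (ltnP m d) => hd.
  have -> : dwin m = row (Ordinal hd) dE by apply/rowP => j; rewrite !mxE.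
  exact: row_sub.
have -> : dwin m = \sum_(l < d) c l *: dwin (m - d + l)%N.
  apply/rowP => j; rewrite !mxE summxE.
  have -> : (m + j = (m - d + j) + d)%N by rewrite addnAC subnK.
  rewrite rec; apply: eq_bigr => l _; rewrite !mxE; congr (_ * s _).
  by rewrite addnAC.
apply: summx_sub => l _; apply: scalemx_sub; apply: IH.
have := ltn_ord l; lia.
Qed.

Definition dbeta m := dwin m *m pinvmx dE.

Lemma d_shift_comb m k : s (m + k)%N = \sum_(i < d) dbeta m 0 i * s (i + k)%N.
Proof.
apply: (d_rec_ext (x := fun k => s (m + k)%N) (y := fun k => \sum_(i < d) dbeta m 0 i * s (i + k)%N)).
- by move=> k'; rewrite addnA rec; apply: eq_bigr => l _; rewrite addnA.
- move=> k'; rewrite /=.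
  under eq_bigr => i _ do rewrite addnA rec mulr_sumr.
  rewrite exchange_big /=; apply: eq_bigr => l _.
  rewrite mulr_sumr; apply: eq_bigr => i _; rewrite mulrCA; congr (_ * (_ * s _)).
  by rewrite addnA.
- move=> k' hk.
  have := mulmxKpV (dwin_sub m) => /rowP /(_ (Ordinal hk)).
  rewrite !mxE; move=> <-; apply: eq_bigr => i _; rewrite [dE _ _]mxE. by [].
Qed.

Definition dWs m := \sum_(j < d) `|s (m + j)%N|.
Definition dPt := \sum_(j < d) \sum_(i < d) `|pinvmx dE j i|.

Lemma d_le_sum_term (I : finType) (G : I -> F) i0 : (forall i, 0 <= G i) -> G i0 <= \sum_i G i.
Proof. by move=> h; rewrite (bigD1 i0) //= lerDl sumr_ge0. Qed.

Lemma dWs_ge0 m : 0 <= dWs m.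
Proof. by apply: sumr_ge0 => j _. Qed.
Lemma dPt_ge0 : 0 <= dPt.
Proof. by apply: sumr_ge0 => j _; apply: sumr_ge0. Qed.

Lemma dbeta_bound m i : `|dbeta m 0 i| <= dWs m * dPt.
Proof.
rewrite /dbeta mxE (le_trans (ler_norm_sum _ _ _)) // /dWs mulr_suml ler_sum // => j _.
rewrite normrM mxE ler_wpM2l //.
apply: le_trans (d_le_sum_term j _) => [|j']; last by apply: sumr_ge0.
by rewrite (bigD1 i) //= lerDl sumr_ge0.
Qed.

Lemma d_step m k : `|s (m + k)%N| <= dWs m * dPt * dWs k.
Proof.
rewrite d_shift_comb (le_trans (ler_norm_sum _ _ _)) // /dWs mulr_sumr ler_sum // => i _.
rewrite normrM addnC ler_wpM2r //; exact: dbeta_bound.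
Qed.

Lemma d_halving : (forall e, 0 < e -> exists K, forall t, (K <= t)%N -> `|s t| <= e) ->
  exists K, (0 < K)%N /\ forall m, dWs (m + K)%N <= dWs m / 2.
Proof.
move=> h0.
pose e := (2 * (dPt * (d%:R ^+ 2) + 1))^-1.
have e0 : 0 < e by rewrite invr_gt0 mulr_gt0 // ltr_wpDl // mulr_ge0 // ?dPt_ge0 // exprn_ge0.
have [K hK] := h0 e e0.
exists K.+1; split => // m.
have hW : forall j, (K <= j)%N -> dWs j <= d%:R * e.
  move=> j hj; apply: (@le_trans _ _ (\sum_(i<d) e)).
    by apply: ler_sum => i _; apply: hK; exact: leq_trans hj (leq_addr _ _).
  by rewrite sumr_const card_ord mulr_natl.
apply: (@le_trans _ _ (\sum_(j < d) dWs m * dPt * dWs (K.+1 + j)%N)).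
  by apply: ler_sum => j _; rewrite -addnA; apply: d_step.
rewrite -mulr_sumr -mulrA ler_wpM2l ?dWs_ge0 //.
apply: (@le_trans _ _ (dPt * (d%:R * (d%:R * e)))).
  rewrite ler_wpM2l ?dPt_ge0 //.
  apply: (@le_trans _ _ (\sum_(j < d) (d%:R * e))).
    by apply: ler_sum => j _; apply: hW; lia.
  by rewrite sumr_const card_ord -[_ *+ d]mulr_natl.
have hX : 0 <= dPt * d%:R ^+ 2 by rewrite mulr_ge0 ?dPt_ge0 ?exprn_ge0.
rewrite (_ : dPt * (d%:R * (d%:R * e)) = (dPt * d%:R ^+ 2) / (2 * (dPt * d%:R ^+ 2 + 1))); last first.
  by rewrite /e expr2 !mulrA.
by rewrite ler_pdivrMr ?mulr_gt0 ?ltr_wpDl // mulKf ?pnatr_eq0 // lerDl ler01.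
Qed.

End Decay.



Lemma pow_small (F : realFieldType) (K : nat) (eps : F) : 0 <= eps -> K%:R * eps <= 4^-1 ->
  forall k, (k <= K)%N -> (1 + eps) ^+ k <= 1 + 2 * k%:R * eps.
Proof.
move=> e0 hK; elim => [|k IH] hk; first by rewrite expr0 mulr0n mulr0 mul0r addr0.
have hk' : (k <= K)%N by apply: ltnW.
have := IH hk' => {}IH.
have kK : k%:R <= K%:R :> F by rewrite ler_nat.
rewrite exprS -natr1.
have h1 : (1 + eps) * (1 + eps) ^+ k <= (1 + eps) * (1 + 2 * k%:R * eps).
  by rewrite ler_wpM2l // addr_ge0.
apply: le_trans h1 _.
have : k%:R * eps <= 4^-1 by apply: le_trans hK; rewrite ler_wpM2r.
have k0 : 0 <= k%:R :> F by [].
nra.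
Qed.

Lemma weighted_bound (F : realFieldType) (W : nat -> F) K : (0 < K)%N ->
  (forall m, 0 <= W m) -> (forall m, W (m + K)%N <= W m / 2) ->
  exists2 eps : F, 0 < eps & exists B, forall T, \sum_(t < T) W t * (1 + eps) ^+ t <= B.
Proof.
move=> K0 W0 hW.
have K0' : 0 < K%:R :> F by rewrite ltr0n.
pose eps : F := (4 * K%:R)^-1.
have e0 : 0 < eps by rewrite invr_gt0 mulr_gt0.
exists eps => //.
have hKe : K%:R * eps = 4^-1 by rewrite /eps invfM mulrCA mulfV ?mulr1 // gt_eqF.
have hp : (1 + eps) ^+ K <= 3 / 2.
  have hK4 : K%:R * eps <= 4^-1 by rewrite hKe.
  apply: le_trans (pow_small (ltW e0) hK4 (leqnn K)) _.
  rewrite -mulrA hKe; lra.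
pose V t := W t * (1 + eps) ^+ t.
have V0 : forall t, 0 <= V t by move=> t; rewrite mulr_ge0 // exprn_ge0 // addr_ge0 // ltW.
have hV : forall t, V (K + t)%N <= 3 / 4 * V t.
  move=> t; rewrite /V addnC exprD mulrA.
  have h1 := hW t.
  have h2 : 0 <= (1 + eps) ^+ t by rewrite exprn_ge0 // addr_ge0 // ltW.
  have h3 : 0 <= (1 + eps) ^+ K by rewrite exprn_ge0 // addr_ge0 // ltW.
  have h4 := W0 t. have h5 := W0 (t + K)%N.
  have : W (t + K)%N * (1 + eps) ^+ K <= W t / 2 * (3 / 2).
    apply: le_trans (ler_wpM2l h5 hp) _; apply: ler_wpM2r => //; lra.
  rewrite mulrAC [X in _ <= X]mulrC; move=> h.
  nra.
pose S T := \sum_(t < T) V t.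
have split1 : forall T, S (K + T)%N = S K + \sum_(t < T) V (K + t)%N.
  by move=> T; rewrite /S big_split_ord.
have mono : forall T, S T <= S (K + T)%N.
  move=> T; rewrite /S addnC big_split_ord /= lerDl sumr_ge0 //.
have hS : forall T, S (K + T)%N <= 4 * S K.
  move=> T; have := split1 T.
  have : \sum_(t < T) V (K + t)%N <= 3 / 4 * S T.
    by rewrite /S mulr_sumr; apply: ler_sum => i _; apply: hV.
  have := mono T. have : 0 <= S K by apply: sumr_ge0.
  move=> *; lra.
exists (4 * S K) => T; apply: le_trans (mono T) (hS T).
Qed.



Section Comb.
Variable n : nat.

Definition mdeg (k : midx n) : nat := (\sum_(i < n) k i)%N.
Definition bs M : seq (midx n) := [seq box_midx j | j <- enum {ffun 'I_n -> 'I_M.+1}].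
Definition addm (x y : midx n) : midx n := [ffun i => (x i + y i)%N].
Definition subm (k x : midx n) : midx n := [ffun i => (k i - x i)%N].
Definition lem (x k : midx n) := [forall i, (x i <= k i)%N].

Lemma box_midx_inj M : injective (@box_midx n M).
Proof.
move=> j1 j2 h; apply/ffunP => i; apply: val_inj.
by have := congr1 (fun f : midx n => f i) h; rewrite !ffunE.
Qed.

Lemma bs_uniq M : uniq (bs M).
Proof. by rewrite map_inj_uniq ?enum_uniq //; apply: box_midx_inj. Qed.

Lemma mem_bs M (k : midx n) : (k \in bs M) = [forall i, (k i <= M)%N].
Proof.
apply/idP/idP.
  case/mapP => j _ ->; apply/forallP => i; rewrite ffunE; exact: (ltnSE (ltn_ord _)).
move/forallP => h; apply/mapP; exists [ffun i => (inord (k i) : 'I_M.+1)]; first by rewrite mem_enum.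
apply/ffunP => i; rewrite !ffunE inordK //; exact: h.
Qed.

Lemma le_deg (k : midx n) i : (k i <= mdeg k)%N.
Proof. by rewrite /mdeg (bigD1 i) //= leq_addr. Qed.

Lemma mmax_deg (k : midx n) : (mmax k <= mdeg k)%N.
Proof. by apply/bigmax_leqP => i _; apply: le_deg. Qed.

Lemma deg_addm (x y : midx n) : mdeg (addm x y) = (mdeg x + mdeg y)%N.
Proof. by rewrite /mdeg -big_split; apply: eq_bigr => i _; rewrite ffunE. Qed.

Lemma deg_subm (k x : midx n) : lem x k -> mdeg (subm k x) = (mdeg k - mdeg x)%N.
Proof.
move/forallP => h; rewrite /mdeg -sumnB; last by move=> i _; apply: h.
by apply: eq_bigr => i _; rewrite ffunE.
Qed.

Lemma in_bs_deg M (k : midx n) : (mdeg k <= M)%N -> k \in bs M.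
Proof. by move=> h; rewrite mem_bs; apply/forallP => i; apply: leq_trans (le_deg k i) h. Qed.

Variable R : rcfType.
Local Notation V := R[i].

Lemma seq_sum_eq (W : nmodType) (T : eqType) (s1 s2 : seq T) (P : pred T) (f : T -> W) :
  uniq s1 -> uniq s2 -> (forall x, P x -> (x \in s1) = (x \in s2)) ->
  \sum_(x <- s1 | P x) f x = \sum_(x <- s2 | P x) f x.
Proof.
move=> u1 u2 h; rewrite -[LHS]big_filter -[RHS]big_filter; apply: perm_big; apply: uniq_perm; rewrite ?filter_uniq //.
by move=> x; rewrite !mem_filter; case Px: (P x) => //=; apply: h.
Qed.

Lemma cauchyE (Q a : midx n -> V) (k : midx n) M : (mmax k <= M)%N ->
  cauchy_coef Q a k = \sum_(x <- bs M | lem x k) Q x * a (subm k x).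
Proof.
move=> hM; rewrite /cauchy_coef.
rewrite -(@seq_sum_eq _ _ (bs (mmax k))) ?bs_uniq //; last first.
  move=> x /forallP hx; rewrite !mem_bs; apply/idP/idP => /forallP h; apply/forallP => i.
    exact: leq_trans (h i) hM.
  apply: leq_trans (hx i) _; exact: leq_bigmax.
rewrite /bs big_map big_enum_cond /=; apply: eq_big => // j.
by rewrite /lem; apply/forallP/forallP => h i; have := h i; rewrite ffunE.
Qed.


Definition gr (f : midx n -> V) m := \sum_(k <- bs m | mdeg k == m) f k.

Lemma gr_box f j m : (j <= m)%N -> gr f j = \sum_(k <- bs m | mdeg k == j) f k.
Proof.
move=> h; apply: seq_sum_eq; rewrite ?bs_uniq // => x /eqP hx.
by rewrite !in_bs_deg // hx.
Qed.

Lemma sum_prod_cond (T : Type) (s : seq T) (P Q : pred T) (f g : T -> V) :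
  (\sum_(x <- s | P x) f x) * (\sum_(y <- s | Q y) g y) =
  \sum_(x <- s) \sum_(y <- s) (if P x && Q y then f x * g y else 0).
Proof.
rewrite big_distrl /= big_mkcond /=; apply: eq_bigr => x _.
case: (P x) => /=; last by rewrite big1.
rewrite big_distrr big_mkcond /=; apply: eq_bigr => y _.
by case: (Q y).
Qed.

Lemma inner_j (m dx dy : nat) (v : V) :
  \sum_(j < m.+1) (if (dx == j :> nat) && (dy == m - j)%N then v else 0) =
  if (dx + dy == m)%N then v else 0.
Proof.
case: (leqP dx m) => h.
  rewrite (bigD1 (Ordinal (h : (dx < m.+1)%N))) //= eqxx /= big1 => [|j hj]; last first.
    suff -> : (dx == j) = false by [].
    by apply/negbTE; apply: contra hj => /eqP hj; apply/eqP/val_inj.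
  have -> : (dy == m - dx)%N = (dx + dy == m)%N by apply/eqP/eqP; lia.
  by rewrite addr0.
rewrite big1 => [|j _].
  suff -> : (dx + dy == m)%N = false by []. by apply/negbTE; apply/eqP; lia.
suff -> : (dx == j) = false by [].
apply/negbTE/eqP => hj; have := ltn_ord j; lia.
Qed.

Lemma addmK x y : subm (addm x y) x = y.
Proof. by apply/ffunP => i; rewrite !ffunE addKn. Qed.

Lemma addm_inj x : injective (addm x).
Proof. by move=> y1 y2 h; rewrite -(addmK x y1) h addmK. Qed.

Lemma fixed_x (Q a : midx n -> V) m x :
  \sum_(k <- bs m | (mdeg k == m) && lem x k) Q x * a (subm k x) =
  \sum_(y <- bs m) (if (mdeg x + mdeg y == m)%N then Q x * a y else 0).
Proof.
rewrite -big_mkcond /=.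
rewrite -[RHS]big_filter.
have -> : \sum_(y <- [seq y <- bs m | (mdeg x + mdeg y == m)%N]) Q x * a y =
          \sum_(k <- map (addm x) [seq y <- bs m | (mdeg x + mdeg y == m)%N]) Q x * a (subm k x).
  by rewrite big_map; apply: eq_bigr => y _; rewrite addmK.
rewrite -big_filter; apply: perm_big; apply: uniq_perm.
- by rewrite filter_uniq ?bs_uniq.
- by rewrite map_inj_uniq ?filter_uniq ?bs_uniq //; apply: addm_inj.
move=> k; rewrite mem_filter; apply/idP/idP.
  case/andP => /andP [/eqP dk lk] kb; apply/mapP; exists (subm k x).
    rewrite mem_filter deg_subm // dk; apply/andP; split.
      apply/eqP; have := (@le_deg x); move: lk => /forallP lk.
      suff : (mdeg x <= mdeg k)%N by rewrite dk; lia.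
      by rewrite /mdeg; apply: leq_sum => i _; apply: lk.
    rewrite mem_bs; apply/forallP => i; rewrite ffunE.
    by move: kb; rewrite mem_bs => /forallP /(_ i) h; apply: leq_trans (leq_subr _ _) h.
  move: lk => /forallP lk; apply/ffunP => i; rewrite !ffunE subnKC //.
case/mapP => y; rewrite mem_filter => /andP [/eqP hd yb] ->.
rewrite deg_addm hd eqxx /= in_bs_deg ?deg_addm ?hd // andbT.
by apply/forallP => i; rewrite ffunE leq_addr.
Qed.

Lemma graded_identity (P Q a : midx n -> V) :
  (forall k, cauchy_coef Q a k = P k) ->
  forall m, \sum_(j < m.+1) gr Q j * gr a (m - j)%N = gr P m.
Proof.
move=> hc m.
have L : \sum_(j < m.+1) gr Q j * gr a (m - j)%N =
   \sum_(x <- bs m) \sum_(y <- bs m) (if (mdeg x + mdeg y == m)%N then Q x * a y else 0).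
  rewrite (eq_bigr (fun j : 'I_m.+1 => \sum_(x <- bs m) \sum_(y <- bs m)
      (if (mdeg x == j :> nat) && (mdeg y == m - j)%N then Q x * a y else 0))); last first.
    move=> j _; rewrite (gr_box _ (ltnSE (ltn_ord j))) (gr_box _ (leq_subr j m)).
    exact: sum_prod_cond.
  rewrite exchange_big /=; apply: eq_bigr => x _.
  rewrite exchange_big /=; apply: eq_bigr => y _.
  exact: inner_j.
rewrite L /gr; symmetry.
rewrite (eq_bigr (fun k => \sum_(x <- bs m | lem x k) Q x * a (subm k x))); last first.
  move=> k /eqP hk; rewrite -hc; apply: cauchyE; rewrite -hk; exact: mmax_deg.
rewrite big_mkcond /=.
rewrite (eq_bigr (fun k => \sum_(x <- bs m) (if (mdeg k == m) && lem x k then Q x * a (subm k x) else 0))); last first.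
  move=> k _; case: (mdeg k == m) => /=; last by rewrite big1.
  by rewrite big_mkcond.
rewrite exchange_big /=; apply: eq_bigr => x _.
by rewrite -fixed_x [RHS]big_mkcond.
Qed.

End Comb.



Lemma to0 (R : realType) (u : nat -> R) L : (forall m, 0 <= u m) ->
  (forall M, \sum_(m < M) u m <= L) -> forall e, 0 < e -> exists K, forall t, (K <= t)%N -> u t <= e.
Proof.
move=> u0 hL e e0.
pose E := [set x : R | exists M, x = \sum_(m < M) u m]%classic.
have hs : has_sup E.
  split; first by exists 0; exists 0%N; rewrite big_ord0.
  by exists L => x [M ->]; exact: hL.
have [x [M0 ->] hx] := sup_adherent e0 hs.
exists M0 => t ht.
have ub : \sum_(m < t.+1) u m <= sup E by apply: (sup_upper_bound hs); exists t.+1.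
have mono : \sum_(m < M0) u m <= \sum_(m < t) u m.
  by rewrite -(subnKC ht) big_split_ord /= lerDl sumr_ge0.
rewrite big_ord_recr /= in ub.
lra.
Qed.

Lemma sum_pick (W : nmodType) (M dk : nat) (v : W) :
  \sum_(m < M) (if dk == m :> nat then v else 0) = if (dk < M)%N then v else 0.
Proof.
case: (ltnP dk M) => h.
  rewrite (bigD1 (Ordinal h)) //= eqxx big1 ?addr0 // => j hj.
  suff -> : (dk == j) = false by [].
  by apply/negbTE; apply: contra hj => /eqP hj; apply/eqP/val_inj.
rewrite big1 // => j _; suff -> : (dk == j) = false by [].
apply/negbTE/eqP => hj; have := ltn_ord j; lia.
Qed.

Lemma sub_sum (F : numDomainType) (T : eqType) (s1 s2 : seq T) (P : pred T) (f : T -> F) :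
  uniq s1 -> uniq s2 -> (forall x, x \in s1 -> (x \in s2) && P x) -> (forall x, 0 <= f x) ->
  \sum_(x <- s1) f x <= \sum_(x <- s2 | P x) f x.
Proof.
move=> u1 u2 hs f0.
have e : \sum_(x <- s2 | P x && (x \in s1)) f x = \sum_(x <- s1) f x.
  rewrite (@seq_sum_eq _ _ s2 s1) //; last first.
    by move=> x /andP [_ h]; rewrite h; case/andP: (hs x h).
  rewrite [LHS]big_seq_cond [RHS]big_seq_cond; apply: eq_bigl => x.
  by case: (boolP (x \in s1)) => h //=; case/andP: (hs x h) => _ ->.
rewrite [X in _ <= X](bigID (fun x => x \in s1)) /= e.
by rewrite lerDl sumr_ge0.
Qed.

Local Open Scope complex_scope.



Section Cabs.
Variable R : rcfType.
Implicit Types x y z : R[i].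

Lemma cabsE z : `|z| = (cabs z)%:C.
Proof. by rewrite /cabs RRe_real // normr_real. Qed.

Lemma cabs_ge0 z : 0 <= cabs z.
Proof. by rewrite -ler0c -cabsE normr_ge0. Qed.

Lemma cabsM x y : cabs (x * y) = cabs x * cabs y.
Proof. by apply: (@complexI R); rewrite rmorphM -!cabsE normrM. Qed.

Lemma cabsX x m : cabs (x ^+ m) = cabs x ^+ m.
Proof. by apply: (@complexI R); rewrite rmorphXn -!cabsE normrX. Qed.

Lemma cabs_prod n (F : 'I_n -> R[i]) : cabs (\prod_(i < n) F i) = \prod_(i < n) cabs (F i).
Proof. by apply: (@complexI R); rewrite rmorph_prod -cabsE normr_prod; apply: eq_bigr => i _; rewrite cabsE. Qed.

Lemma ReS (I : Type) (s : seq I) (P : pred I) (F : I -> R[i]) :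
  complex.Re (\sum_(i <- s | P i) F i) = \sum_(i <- s | P i) complex.Re (F i).
Proof.
have ReD : forall x y : R[i], complex.Re (x + y) = complex.Re x + complex.Re y by move=> [? ?] [? ?].
elim: s => [|x s IH]; rewrite ?big_nil ?big_cons //; case: (P x) => //.
by rewrite ReD IH.
Qed.

Lemma ImS (I : Type) (s : seq I) (P : pred I) (F : I -> R[i]) :
  complex.Im (\sum_(i <- s | P i) F i) = \sum_(i <- s | P i) complex.Im (F i).
Proof.
have ImD : forall x y : R[i], complex.Im (x + y) = complex.Im x + complex.Im y by move=> [? ?] [? ?].
elim: s => [|x s IH]; rewrite ?big_nil ?big_cons //; case: (P x) => //.
by rewrite ImD IH.
Qed.

Lemma ReMr z r : complex.Re (z * r%:C) = complex.Re z * r.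
Proof. by case: z => x y /=; ring. Qed.
Lemma ImMr z r : complex.Im (z * r%:C) = complex.Im z * r.
Proof. by case: z => x y /=; ring. Qed.

Lemma real_ge0 z : 0 <= z -> z = (cabs z)%:C.
Proof. by move=> h; rewrite -cabsE ger0_norm. Qed.

End Cabs.

Lemma lerXn_nn (F : numDomainType) (x y : F) m : 0 <= x -> x <= y -> x ^+ m <= y ^+ m.
Proof.
move=> x0 xy; elim: m => [|m IH]; first by rewrite !expr0.
by rewrite !exprS ler_pM // exprn_ge0.
Qed.

Lemma regroup n (R : numDomainType) (h : midx n -> R) M B : (M <= B.+1)%N ->
  \sum_(m < M) \sum_(k <- bs n m | mdeg k == m) h k = \sum_(k <- bs n B | (mdeg k < M)%N) h k.
Proof.
move=> hMB.
rewrite (eq_bigr (fun m : 'I_M => \sum_(k <- bs n B | mdeg k == m) h k)); last first.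
  move=> m _; apply: seq_sum_eq; rewrite ?bs_uniq // => x /eqP hx.
  rewrite !in_bs_deg // hx //; have := ltn_ord m; lia.
rewrite (eq_bigr (fun m : 'I_M => \sum_(k <- bs n B) (if mdeg k == m :> nat then h k else 0))); last first.
  by move=> m _; rewrite big_mkcond.
rewrite exchange_big /= [RHS]big_mkcond /=; apply: eq_bigr => k _.
exact: sum_pick.
Qed.




Theorem lemmaB3 (R : realType) (n : nat) (P Q a : midx n -> R[i]) :
  is_poly P -> is_poly Q -> Q (midx0 n) != 0 ->
  (forall k, cauchy_coef Q a k = P k) ->
  (forall k, 0 <= a k) ->
  (\esum_(k in [set: midx n]) ((cabs (a k))%:E) < +oo)%E ->
  exists2 eps : R, 0 < eps &
    forall w : 'I_n -> R[i], (forall i, cabs (w i) <= 1 + eps) ->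
      (\esum_(k in [set: midx n]) ((cabs (a k * monom w k))%:E) < +oo)%E.
Proof.
move=> [dP hP] [dQ hQ] hQ0 hc ha hsum.
pose ar k := cabs (a k).
have aR : forall k, a k = (ar k)%:C by move=> k; apply: real_ge0.
have ar0 : forall k, 0 <= ar k by move=> k; apply: cabs_ge0.
pose br m := \sum_(k <- bs n m | mdeg k == m) ar k.
have bE : forall m, gr a m = (br m)%:C.
  by move=> m; rewrite /gr /br rmorph_sum; apply: eq_bigr => k _; rewrite aR.
have br0 : forall m, 0 <= br m by move=> m; apply: sumr_ge0.
have polybig : forall (f : midx n -> R[i]) df, (forall k : midx n, ~~ [forall i, (k i <= df)%N] -> f k = 0) ->
    forall j, (n * df < j)%N -> gr f j = 0.
  move=> f df hf j hj; rewrite /gr big1 // => k /eqP hk; apply: hf; apply/negP => /forallP /= hall.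
  have : (mdeg k <= n * df)%N.
    have h1 : (mdeg k <= \sum_(i < n) df)%N by rewrite /mdeg; apply: leq_sum => i _; apply: hall.
    by apply: leq_trans h1 _; rewrite sum_nat_const card_ord.
  lia.
have q0 : gr Q 0%N = Q (midx0 n).
  rewrite /gr (@seq_sum_eq _ _ _ [:: midx0 n]) ?bs_uniq //=.
    rewrite big_cons big_nil /= (_ : mdeg (midx0 n) == 0%N) ?addr0 //.
    by apply/eqP; rewrite /mdeg big1 // => i _; rewrite ffunE.
  move=> x /eqP hx.
  have -> : x = midx0 n.
    by apply/ffunP => i; rewrite ffunE; have := le_deg x i; rewrite hx leqn0 => /eqP.
  rewrite mem_seq1 eqxx in_bs_deg // /mdeg big1 // => i _; rewrite ffunE.
  by [].
pose fs (z : R[i]) := if complex.Re (gr Q 0%N) != 0 then complex.Re z else complex.Im z.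
have fsq0 : fs (gr Q 0%N) != 0.
  rewrite /fs; case: ifP => // /negbFE /eqP hre; apply/negP => /eqP him.
  move: hQ0; rewrite -q0; case: (gr Q 0%N) hre him => x y /= -> ->.
  by rewrite eqxx.
have fsM : forall z r, fs (z * r%:C) = fs z * r.
  by move=> [x y] r; rewrite /fs; case: ifP => _ /=; ring.
have fsS : forall (I : Type) (s : seq I) (p : pred I) (F : I -> R[i]),
    fs (\sum_(i <- s | p i) F i) = \sum_(i <- s | p i) fs (F i).
  by move=> I s p F; rewrite /fs; case: ifP => _; [apply: ReS | apply: ImS].
have fs0 : fs 0 = 0 by rewrite /fs; case: ifP.
pose D := (n * dQ).+1.
pose N0 := (n * dP).+1.
pose fq j := fs (gr Q j).
pose c (l : 'I_D) := - (fq (D - l)%N / fq 0%N).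
pose s t := br (N0 + t)%N.
have rec : forall t, s (t + D)%N = \sum_(l < D) c l * s (t + l)%N.
  move=> t; set M := (N0 + t + D)%N.
  have h1 := graded_identity hc M.
  rewrite (polybig P dP hP M) in h1; last by rewrite /M /N0; lia.
  have h2 : \sum_(j < M.+1) fq j * br (M - j)%N = 0.
    have := congr1 fs h1; rewrite fsS fs0 => h1'; rewrite -[RHS]h1'.
    by apply: eq_bigr => j _; rewrite bE fsM.
  have h3 : \sum_(j < D.+1) fq j * br (M - j)%N = 0.
    rewrite -[RHS]h2 (big_ord_widen _ (fun j => fq j * br (M - j)%N) (_ : D.+1 <= M.+1)%N); last first.
      by rewrite /M; lia.
    rewrite [LHS]big_mkcond; apply: eq_bigr => j _; case: ifP => // hj.
    rewrite /fq (polybig Q dQ hQ j) ?fs0 ?mul0r //; move: hj; rewrite /D; lia.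
  rewrite big_ord_recl /= (reindex_inj rev_ord_inj) /= in h3.
  have e3 : fq 0%N * br M + \sum_(l < D) fq (D - l)%N * s (t + l)%N = 0.
    rewrite -[RHS]h3 subn0; congr (_ + _); apply: eq_bigr => l _.
    have hl := ltn_ord l.
    rewrite /s /bump /=; congr (fq _ * br _); rewrite /M; lia.
  have -> : \sum_(l < D) c l * s (t + l)%N = - (fq 0%N)^-1 * \sum_(l < D) fq (D - l)%N * s (t + l)%N.
    by rewrite mulr_sumr; apply: eq_bigr => l _; rewrite /c; ring.
  have -> : \sum_(l < D) fq (D - l)%N * s (t + l)%N = - (fq 0%N * br M) by move/eqP: e3; rewrite addr_eq0 => /eqP ->; rewrite opprK.
  by rewrite /s /M -addnA mulNr mulrN opprK mulKf.
have esum_ge : forall M, ((\sum_(m < M) br m)%:E <= \esum_(k in [set: midx n]) (cabs (a k))%:E)%E.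
  move=> M.
  have eq1 : \sum_(m < M) br m = \sum_(k <- bs n M | (mdeg k < M)%N) ar k.
    by rewrite /br (regroup ar (_ : M <= M.+1)%N).
  rewrite eq1 -big_filter -sumEFin fsbig_seq ?filter_uniq ?bs_uniq //.
  apply: esum_ge; exists [set` [seq x <- bs n M | (mdeg x < M)%N]]%classic => //.
  by split; [exact: finite_seq | by []].
have esum0 : (0 <= \esum_(k in [set: midx n]) (cabs (a k))%:E)%E.
  by apply: esum_ge0 => k _; rewrite lee_fin cabs_ge0.
pose L := fine (\esum_(k in [set: midx n]) (cabs (a k))%:E).
have esumL : \esum_(k in [set: midx n]) (cabs (a k))%:E = L%:E.
  by rewrite /L fineK // ge0_fin_numE.
have hbrL : forall M, \sum_(m < M) br m <= L by move=> M; rewrite -lee_fin -esumL; apply: esum_ge.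
have tend := to0 br0 hbrL.
have tends : forall e : R, 0 < e -> exists K, forall t, (K <= t)%N -> `|s t| <= e.
  move=> e e0; have [K hK] := tend e e0; exists K => t ht.
  by rewrite ger0_norm ?br0 //; apply: hK; apply: leq_trans ht (leq_addl _ _).
have [K [K0 hK]] := d_halving rec tends.
have W0 : forall m, 0 <= dWs D s m by move=> m; apply: dWs_ge0.
have [eps eps0 [B hB]] := weighted_bound K0 W0 hK.
exists eps => // w hw.
pose rho := 1 + eps.
have rho0 : 0 <= rho by rewrite /rho addr_ge0 // ltW.
have hsW : forall t, `|s t| <= dWs D s t.
  by move=> t; rewrite /dWs /D big_ord_recl /= addn0 lerDl sumr_ge0.
pose B' := \sum_(m < N0) br m * rho ^+ m + rho ^+ N0 * B.
have partial : forall T, \sum_(m < T) br m * rho ^+ m <= B'.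
  move=> T.
  have h1 : \sum_(m < T) br m * rho ^+ m <= \sum_(m < N0 + T) br m * rho ^+ m.
    rewrite addnC big_split_ord /= lerDl; apply: sumr_ge0 => i _.
    by rewrite mulr_ge0 // exprn_ge0.
  apply: le_trans h1 _; rewrite big_split_ord /= lerD2l.
  have -> : \sum_(i < T) br (N0 + i)%N * rho ^+ (N0 + i) = rho ^+ N0 * \sum_(i < T) s i * rho ^+ i.
    by rewrite mulr_sumr; apply: eq_bigr => i _; rewrite exprD /s; ring.
  rewrite ler_wpM2l ?exprn_ge0 //; apply: le_trans (hB T); apply: ler_sum => i _.
  apply: ler_wpM2r; first by rewrite exprn_ge0.
  by apply: le_trans (hsW i); apply: ler_norm.
have term : forall k, cabs (a k * monom w k) <= ar k * rho ^+ mdeg k.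
  move=> k; rewrite cabsM /monom cabs_prod ler_wpM2l ?cabs_ge0 //.
  rewrite /mdeg -prodrXr; apply: ler_prod => i _; rewrite cabsX.
  by rewrite exprn_ge0 ?cabs_ge0 //= lerXn_nn ?cabs_ge0 ?hw.
apply: (@le_lt_trans _ _ B'%:E); last exact: ltry.
apply: ge_ereal_sup => _ [X [finX _] <-].
rewrite fsbig_finite // sumEFin lee_fin.
pose Dm := (\max_(k <- finmap.enum_fset (fset_set X)) mdeg k)%N.
apply: le_trans (@sub_sum _ _ (finmap.enum_fset (fset_set X)) (bs n Dm) (fun k => (mdeg k < Dm.+1)%N) _ _ _ _ _) _.
- exact: finmap.fset_uniq.
- exact: bs_uniq.
- move=> x hx.
  have hd : (mdeg x <= Dm)%N := leq_bigmax_seq (F := fun k => mdeg k) (P := xpredT) x hx isT.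
  by rewrite in_bs_deg ?ltnS.
- by move=> k; apply: cabs_ge0.
apply: (@le_trans _ _ (\sum_(k <- bs n Dm | (mdeg k < Dm.+1)%N) ar k * rho ^+ mdeg k)).
  by apply: ler_sum => k _; apply: term.
rewrite -(regroup (fun k => ar k * rho ^+ mdeg k) (leqnn Dm.+1)).
apply: le_trans (partial Dm.+1); rewrite le_eqVlt; apply/orP; left; apply/eqP.
apply: eq_bigr => m _; rewrite /br mulr_suml; apply: eq_bigr => k /eqP ->.
by [].
Qed.
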